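(* Let $T$ be a finite tree and let $L$ be the set of pendant edges of $T$. Then $\mathrm{gp_e}(T) = |L|$.
   Context: A pendant vertex is a vertex of degree one; a pendant edge is an edge incident to a pendant vertex. A set $S$ of edges of a graph $G$ is an edge general position set if no geodesic (shortest path) of $G$ contains three edges of $S$; $\mathrm{gp_e}(G)$ is the maximum cardinality of an edge general position set of $G$. *)

(* Defs.v *)
From mathcomp Require Import all_boot.
From mathcomp Require Import boolp.
Set Implicit Arguments. Unset Strict Implicit. Unset Printing Implicit Defensive.

Section Graphs.
Variable V : finType.
Variable e : rel V.

Definition simple_graph : Prop := symmetric e /\ irreflexive e.

Definition edgeb (f : {set V}) : bool :=
  [exists x, exists y, e x y && (f == [set x; y])].
Definition edges : {set {set V}} := [set f | edgeb f].

Definition degree (x : V) : nat := #|[set y | e x y]|.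

Definition pendant_edges : {set {set V}} :=
  [set f in edges | [exists x in f, degree x == 1]].

Definition connected_graph : Prop := forall x y : V, connect e x y.
Definition acyclic : Prop :=
  forall c : seq V, 3 <= size c -> uniq c -> ~~ cycle e c.
Definition is_tree : Prop := simple_graph /\ connected_graph /\ acyclic.

(* A walk x :: p (vertices x = x_0, x_1, ..., x_k); its edges {x_i, x_{i+1}}. *)
Definition walk_edges (x : V) (p : seq V) : seq {set V} :=
  pairmap (fun a b => [set a; b]) x p.

Definition geodesic (x : V) (p : seq V) : Prop :=
  path e x p /\
  forall q : seq V, path e x q -> last x q = last x p -> size p <= size q.

Definition edge_gp_set (S : {set {set V}}) : Prop :=
  S \subset edges /\
  forall (x : V) (p : seq V), geodesic x p ->
    #|[set f in S | f \in walk_edges x p]| < 3.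

Definition gpe : nat := \max_(S : {set {set V}} | `[< edge_gp_set S >]) #|S|.

End Graphs.

(* Main.v *)
Require Import Defs.
From mathcomp Require Import all_boot.
From mathcomp Require Import boolp zify.
Set Implicit Arguments. Unset Strict Implicit. Unset Printing Implicit Defensive.

Lemma geo_uniq (V : finType) (e : rel V) x p : geodesic e x p -> uniq (x :: p).
Proof.
move=> [Pp Hmin]; apply/negPn/negP => nU.
move: (Hmin); case: (shortenP Pp) => q' Pq' Uq' sub Hm.
have := Hm q' Pq' erefl.
have h1 : size (x :: q') <= size (undup (x :: p)).
  apply: uniq_leq_size => // y; rewrite mem_undup !inE => /orP [->//|/sub ->].
  by rewrite orbT.
have h2 : size (undup (x :: p)) < size (x :: p).
  rewrite ltn_neqAle size_undup andbT.
  apply/negP => /eqP E; apply: (negP nU).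
  by rewrite (uniq_size_uniq (undup_uniq (x :: p)) (mem_undup (x :: p))) E.
move: h1 h2 => /=; move: (size q') (size p) (size (undup (x :: p))) => a b c.
clear; lia.
Qed.

Section Tree.
Variable V : finType.
Variable e : rel V.
Hypothesis esym : symmetric e.
Hypothesis eirr : irreflexive e.

Definition consec (a b : V) (s : seq V) := exists s1 s2, s = s1 ++ a :: b :: s2.

Lemma we_cons (x y : V) p : walk_edges x (y :: p) = [set x; y] :: walk_edges y p.
Proof. by []. Qed.

Lemma we_consec (x : V) p f : f \in walk_edges x p ->
  exists a b, f = [set a; b] /\ consec a b (x :: p).
Proof.
elim: p x => [|y p IH] x //.
rewrite we_cons inE => /orP [/eqP ->|/IH [a [b [-> [s1 [s2 E]]]]]].
  by exists x, y; split => //; exists [::], p.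
by exists a, b; split => //; exists (x :: s1), s2; rewrite E.
Qed.

Lemma consec_we (x : V) p a b : consec a b (x :: p) -> [set a; b] \in walk_edges x p.
Proof.
elim: p x => [|y p IH] x [s1 [s2 E]].
  by case: s1 E => [|c [|d s1]].
rewrite we_cons inE; case: s1 E => [|c s1] /= [E1 E2].
  by subst; rewrite eqxx.
by rewrite IH ?orbT //; exists s1, s2.
Qed.

Lemma consec_path a b x p : consec a b (x :: p) -> path e x p -> e a b.
Proof.
move=> [s1 [s2]]; elim: s1 x p => [|c s1 IH] x p /=.
  by case=> -> -> /= /andP [].
case=> -> ->; case: s1 IH => [|d s1] IH /=.
  by case/andP => _ /andP [].
by case/andP => _; apply: IH.
Qed.

Lemma consec_mem a b s : consec a b s -> (a \in s) && (b \in s).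
Proof. by move=> [s1 [s2 ->]]; rewrite !mem_cat !inE !eqxx !orbT. Qed.

Lemma consec_catl a b s t : consec a b s -> consec a b (t ++ s).
Proof. by move=> [s1 [s2 ->]]; exists (t ++ s1), s2; rewrite catA. Qed.

Lemma consec_catr a b s t : consec a b s -> consec a b (s ++ t).
Proof. by move=> [s1 [s2 ->]]; exists s1, (s2 ++ t); rewrite -catA. Qed.

Lemma consec_rev a b s : consec a b s -> consec b a (rev s).
Proof.
move=> [s1 [s2 ->]]; exists (rev s2), (rev s1).
by rewrite rev_cat !rev_cons -!cats1 -!catA.
Qed.

Lemma consec_head x b p : uniq (x :: p) -> consec x b (x :: p) -> b = head x p.
Proof.
move=> U [[|c s1] [s2]] /=; first by case=> ->.
case=> E1 E2; subst c; move: U; rewrite /= E2 mem_cat inE eqxx orbT.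
by [].
Qed.

Lemma walk_cross (A : {set V}) y s : y \notin A -> last y s \in A ->
  exists a b, [/\ a \notin A, b \in A & consec a b (y :: s)].
Proof.
elim: s y => [|z s IH] y /=; first by move=> /negbTE ->.
move=> yA; case: (boolP (z \in A)) => zA.
  by move=> _; exists y, z; split => //; exists [::], s.
move=> /(IH _ zA) [a [b [aA bA [s1 [s2 E]]]]].
by exists a, b; split => //; exists (y :: s1), s2; rewrite E.
Qed.


Lemma last_neq (x : V) p : uniq (x :: p) -> p != [::] -> last x p != x.
Proof.
case: p => //= b p /andP [xn _] _; apply/eqP => E.
by move: (mem_last b p); rewrite E (negbTE xn).
Qed.

Lemma rev_path_sym (x : V) p : path e x p -> path e (last x p) (rev (belast x p)).
Proof.
move=> H; rewrite rev_path; rewrite (@eq_path _ _ e) //.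
Qed.

Hypothesis eacyc : acyclic e.

Lemma upath_unique n (x : V) p q : size p + size q <= n -> path e x p -> uniq (x :: p) ->
  path e x q -> uniq (x :: q) -> last x p = last x q -> p = q.
Proof.
elim: n x p q => [|n IH] x p q.
  by case: p => [|? ?]; case: q.
move=> Hs Pp Up Pq Uq L.
case: (eqVneq p q) => // Hpq.
case: (boolP (has (fun w => (w \in q) && (w != last x p)) p)).
- case/hasP => w wp /andP [wq wy].
  move: Hs Pp Up L wy Hpq; case/splitPr: wp => p1 p2.
  move: Pq Uq; case/splitPr: wq => q1 q2.
  move=> Pq Uq Hs Pp Up L wy Hpq.
  rewrite !last_cat /= in L wy.
  have p2ne : p2 != [::] by apply/eqP => p20; move: wy; rewrite p20 /= eqxx.
  have q2ne : q2 != [::] by apply/eqP => q20; move: L wy; rewrite q20 /= => ->; rewrite eqxx.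
  move: (Pp) (Pq); rewrite -!cat_rcons !cat_path !last_rcons.
  move=> /andP [Pp1 Pp2] /andP [Pq1 Pq2].
  have Up1 : uniq (x :: rcons p1 w).
    by move: Up; rewrite -cat_rcons -cat_cons cat_uniq => /and3P [].
  have Uq1 : uniq (x :: rcons q1 w).
    by move: Uq; rewrite -cat_rcons -cat_cons cat_uniq => /and3P [].
  have Up2 : uniq (w :: p2).
    by move: Up; rewrite -cat_cons cat_uniq => /and3P [].
  have Uq2 : uniq (w :: q2).
    by move: Uq; rewrite -cat_cons cat_uniq => /and3P [].
  move: Hs; rewrite !size_cat /= => Hs.
  have sp2 : 0 < size p2 by rewrite lt0n size_eq0.
  have sq2 : 0 < size q2 by rewrite lt0n size_eq0.
  have E1 : rcons p1 w = rcons q1 w.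
    apply: (IH x) => //; last by rewrite !last_rcons.
    rewrite !size_rcons; move: Hs sp2 sq2.
    move: (size p1) (size p2) (size q1) (size q2) => a b c d; clear; lia.
  have E2 : p2 = q2.
    apply: (IH w) => //; move: Hs sp2 sq2.
    move: (size p1) (size p2) (size q1) (size q2) => a b c d; clear; lia.
  by case/rcons_inj: E1 => ->; rewrite E2.
- move/hasPn => H.
  have pne : p != [::].
    apply/eqP => p0; move: L Hpq; rewrite p0 /= => L Hpq.
    have qne : q != [::] by rewrite eq_sym.
    by move: (last_neq Uq qne); rewrite -L eqxx.
  have qne : q != [::].
    apply/eqP => q0; move: L Hpq; rewrite q0 /= => L.
    by move: (last_neq Up pne); rewrite L eqxx.
  case/lastP: q qne Pq Uq L Hpq H Hs => [//|q0 y] _ Pq Uq L Hpq H Hs.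
  rewrite last_rcons in L.
  have Uq' := Uq; rewrite /= mem_rcons inE negb_or rcons_uniq in Uq'.
  case/and3P: Uq' => /andP [_ xq0] yq0 uq0.
  have xp : x \notin p by case/andP: Up.
  have up : uniq p by case/andP: Up.
  suff [S1 U1 C1] : [/\ 3 <= size (x :: p ++ rev q0), uniq (x :: p ++ rev q0)
      & cycle e (x :: p ++ rev q0)] by move: (eacyc S1 U1); rewrite C1.
  split.
  + rewrite /= size_cat size_rev.
    destruct q0 as [|z q0]; last first.
      by destruct p as [|a p]; rewrite //= addSn addnS.
    destruct p as [|a [|b p]] => //=.
    by move: L Hpq => /= ->; rewrite eqxx.
  + rewrite [uniq _]/= mem_cat mem_rev negb_or xp xq0 cat_uniq up rev_uniq uq0 /= andbT.
    apply/hasPn => w; rewrite mem_rev => wq0; apply/negP => wp.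
    move: (H w wp); rewrite mem_rcons inE wq0 orbT /= L.
    by case: (w =P y) yq0 => [<-|]; rewrite ?wq0.
  + rewrite /cycle rcons_cat -rev_cons cat_path Pp /= L.
    by have := rev_path_sym Pq; rewrite last_rcons belast_rcons.
Qed.


Hypothesis econn : connected_graph e.

Lemma P_ex (u w : V) : exists p, [&& path e u p, uniq (u :: p) & last u p == w].
Proof.
have /connectP [p Pp ->] := econn u w.
case: (shortenP Pp) => p' Pp' Up' _.
by exists p'; rewrite Pp' Up' eqxx.
Qed.

Definition P u w := xchoose (P_ex u w).

Lemma P_spec u w : [/\ path e u (P u w), uniq (u :: P u w) & last u (P u w) = w].
Proof. by have /and3P [? ? /eqP ?] := xchooseP (P_ex u w). Qed.

Lemma P_unique u p : path e u p -> uniq (u :: p) -> P u (last u p) = p.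
Proof.
case: (P_spec u (last u p)) => H1 H2 H3 Pp Up.
by apply: (@upath_unique (size (P u (last u p)) + size p) u).
Qed.

Lemma P_self u : P u u = [::].
Proof. exact: (@P_unique u [::]). Qed.

Lemma P_edge u v : e u v -> P u v = [:: v].
Proof.
move=> euv; apply: (@P_unique u [:: v]); first by rewrite /= euv.
rewrite /= inE andbT; apply/eqP => E; by rewrite E eirr in euv.
Qed.

Lemma P_prefix u p b : path e u p -> uniq (u :: p) -> b \in u :: p ->
  P u b = take (index b (u :: p)) p.
Proof.
move=> Pp Up bp; set i := index b (u :: p).
have ile : i <= size p by have := bp; rewrite -index_mem /= ltnS.
have Lb : last u (take i p) = b.
  rewrite (last_nth u) size_takel // (_ : u :: take i p = take i.+1 (u :: p)) //.
  by rewrite nth_take // nth_index.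
rewrite -{1}Lb; apply: P_unique.
  by move: Pp; rewrite -{1}(cat_take_drop i p) cat_path => /andP [].
rewrite (_ : u :: take i p = take i.+1 (u :: p)) //; exact: take_uniq.
Qed.

Lemma P_size_lt u a b : a != b -> b \in u :: P u a -> size (P u b) < size (P u a).
Proof.
case: (P_spec u a) => Pp Up La ab bp.
have ile : index b (u :: P u a) <= size (P u a).
  by have := bp; rewrite -index_mem /= ltnS.
rewrite (P_prefix Pp Up bp) size_takel // ltn_neqAle ile andbT.
apply/eqP => E.
have : nth u (u :: P u a) (size (P u a)) = b by rewrite -E nth_index.
by rewrite -last_nth La => abE; rewrite abE eqxx in ab.
Qed.

Lemma P_dich u a b : e a b -> P u b = rcons (P u a) b \/ P u a = rcons (P u b) a.
Proof.
move=> eab.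
have ab : a != b by apply/eqP => E; rewrite E eirr in eab.
case: (P_spec u a) => Ppa Upa La; case: (P_spec u b) => Ppb Upb Lb.
case: (boolP (b \in u :: P u a)) => bpa; last first.
  left; rewrite -{1}(last_rcons u (P u a) b); apply: P_unique.
    by rewrite rcons_path Ppa La.
  by rewrite -rcons_cons rcons_uniq bpa Upa.
case: (boolP (a \in u :: P u b)) => apb; last first.
  right; rewrite -{1}(last_rcons u (P u b) a); apply: P_unique.
    by rewrite rcons_path Ppb Lb esym.
  by rewrite -rcons_cons rcons_uniq apb Upb.
have h1 := P_size_lt ab bpa.
have ba : b != a by rewrite eq_sym.
have h2 := P_size_lt ba apb.
by have := ltn_trans h1 h2; rewrite ltnn.
Qed.

Definition B u v : {set V} := [set w | (w != u) && (head u (P u w) == v)].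

Lemma B_tail u w z : z \in P u w -> (z != u) && (head u (P u z) == head u (P u w)).
Proof.
case: (P_spec u w) => Pp Up _ zp.
have zu : z != u by apply/eqP => E; move: zp; rewrite E => zp; move: Up; rewrite /= zp.
have zp' : z \in u :: P u w by rewrite inE zp orbT.
rewrite zu /= (P_prefix Pp Up zp') /=.
have -> : (u == z) = false by rewrite eq_sym (negbTE zu).
by case: (P u w).
Qed.

Lemma B_mem u v w : w \in B u v -> exists r, P u w = v :: r.
Proof.
rewrite inE => /andP [wu]; case: (P_spec u w) => _ _.
case: (P u w) => [|y r] /=; first by move=> E; rewrite E eqxx in wu.
by move=> _ /eqP ->; exists r.
Qed.

Lemma B_tailB u v w z : w \in B u v -> z \in P u w -> z \in B u v.
Proof.
move=> wB zp; case/andP: (B_tail zp) => zu /eqP E.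
by rewrite inE zu E; move: wB; rewrite inE => /andP [].
Qed.

Lemma Bv u v : e u v -> v \in B u v.
Proof.
move=> euv; rewrite inE P_edge //= eqxx andbT.
by apply/eqP => E; rewrite E eirr in euv.
Qed.

Lemma B_disj u v w : e u v -> w \in B u v -> w \in B v u -> False.
Proof.
move=> euv wB; case: (B_mem wB) => r E.
case: (P_spec u w); rewrite E /= => /andP [_ Pr] /andP [ur Ur] Lw.
have Pv : P v w = r by rewrite -Lw; apply: P_unique.
rewrite inE Pv => /andP [wv]; case: r E Pr ur Ur Lw Pv => [|y r] /= _.
  by move=> _ _ _ E'; rewrite E' eqxx in wv.
by move=> _ ur _ _ _ /eqP E'; move: ur; rewrite E' !inE eqxx !orbT.
Qed.

Lemma Cross u v a b : e u v -> a \in B u v -> e a b -> b \notin B u v -> a = v /\ b = u.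
Proof.
move=> euv aB eab bB; case: (B_mem aB) => r Ea.
case: (P_dich u eab) => E.
  case: (eqVneq b u) => bu.
    by move: E; rewrite bu P_self; case: (P u a).
  by move: bB; rewrite inE bu E Ea /= eqxx.
case: (eqVneq b u) => bu.
  by move: E; rewrite bu P_self Ea /= => -[->].
case Eb: (P u b) E => [|y s] E.
  by case: (P_spec u b) => _ _; rewrite Eb /= => E'; rewrite E' eqxx in bu.
by move: E bB; rewrite Ea /= => -[->] _; rewrite inE bu Eb /= eqxx.
Qed.

Lemma upath_geo x p : path e x p -> uniq (x :: p) -> geodesic e x p.
Proof.
move=> Pp Up; split => // q Pq Lq.
case: (shortenP Pq) Lq => q' Pq' Uq' sub Lq.
have E : q' = p by rewrite -(P_unique Pq' Uq') Lq (P_unique Pp Up).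
rewrite -E; apply: uniq_leq_size => //; by case/andP: Uq'.
Qed.


Definition freeb (S : {set {set V}}) f u v :=
  [forall g, ((g \in S) && (g != f)) ==> ~~ (g \subset B u v)].

Lemma edge_ex f : f \in edges e -> exists a b, e a b /\ f = [set a; b].
Proof. by rewrite inE => /existsP [a /existsP [b /andP [eab /eqP ->]]]; exists a, b. Qed.

Lemma freeP (S : {set {set V}}) f u v : freeb S f u v -> forall g, g \in S -> g != f -> ~~ (g \subset B u v).
Proof. by move=> F g gS gf; apply: (implyP (forallP F g)); rewrite gS gf. Qed.

Lemma Dlem (S : {set {set V}}) f f' u v u' v' x : f \in S -> f' \in S -> f != f' -> e u v -> f = [set u; v] ->
  e u' v' -> f' = [set u'; v'] -> freeb S f u v -> freeb S f' u' v' ->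
  x \in B u v -> x \in B u' v' -> False.
Proof.
move=> fS f'S ff' euv Ef eu'v' Ef' /freeP F1 /freeP F2 xB xB'.
case: (boolP (u \in B u' v')) => uB.
  case: (boolP (v \in B u' v')) => vB.
    by apply: (negP (F2 f fS ff')); rewrite Ef subUset !sub1set uB vB.
  have [E1 E2] := Cross eu'v' uB euv vB.
  by move: ff'; rewrite Ef Ef' E1 E2 setUC eqxx.
case: (P_spec u x) => Pp Up Lx.
have LB : last u (P u x) \in B u' v' by rewrite Lx.
have [a [b [aA bA Hc]]] := @walk_cross (B u' v') u (P u x) uB LB.
have eab := consec_path Hc Pp.
have eba : e b a by rewrite esym.
have [E1 E2] := Cross eu'v' bA eba aA.
case: (eqVneq a u) => au.
  have [r Er] := B_mem xB.
  move: (Hc); rewrite au => Hc'; have := consec_head Up Hc'; rewrite Er /= => bv.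
  by move: ff'; rewrite Ef Ef' -E1 -E2 au bv eqxx.
case/andP: (consec_mem Hc); rewrite !inE (negbTE au) /= => ap /orP [/eqP bu|bp].
  by move: bA; rewrite bu (negbTE uB).
have aB := B_tailB xB ap; have bB := B_tailB xB bp.
have f'f : f' != f by rewrite eq_sym.
by apply: (negP (F1 f' f'S f'f)); rewrite Ef' -E1 -E2 subUset !sub1set aB bB.
Qed.

Lemma consec_rcons (x : V) s y : consec (last x s) y (rcons (x :: s) y).
Proof.
rewrite [x :: s]lastI; exists (belast x s), [::].
by rewrite -!cats1 -catA.
Qed.

Lemma gz u v a b : e a b -> a \in B u v -> b \in B u v ->
  exists z c d, [/\ z \in B u v, [set a; b] = [set c; d] & consec c d (u :: P u z)].
Proof.
move=> eab aB bB; case: (P_dich u eab) => E.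
  exists b, a, b; split => //; rewrite E -rcons_cons.
  by have := consec_rcons u (P u a) b; case: (P_spec u a) => _ _ ->.
exists a, b, a; split => //; first by rewrite setUC.
rewrite E -rcons_cons.
by have := consec_rcons u (P u b) a; case: (P_spec u b) => _ _ ->.
Qed.

Lemma cards3 (T : finType) (a b c : T) : a != b -> a != c -> b != c -> #|[set a; b; c]| = 3.
Proof.
move=> ab ac bc; rewrite -setUA cardsU1 cards2 bc !inE negb_or ab ac.
by [].
Qed.

Lemma free_ex (S : {set {set V}}) f : edge_gp_set e S -> f \in S ->
  exists u v, [/\ e u v, f = [set u; v] & freeb S f u v].
Proof.
move=> [Ssub Hgp] fS; have [u [v [euv Ef]]] := edge_ex (subsetP Ssub f fS).
case: (boolP (freeb S f u v)) => F1; first by exists u, v.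
case: (boolP (freeb S f v u)) => F2; first by exists v, u; rewrite esym setUC.
exfalso.
case/forallPn: F1 => g; rewrite negb_imply negbK => /andP [/andP [gS gf] gsub].
case/forallPn: F2 => h; rewrite negb_imply negbK => /andP [/andP [hS hf] hsub].
have [a [b [eab Eg]]] := edge_ex (subsetP Ssub g gS).
have [c [d [ecd Eh]]] := edge_ex (subsetP Ssub h hS).
move: gsub hsub; rewrite Eg Eh !subUset !sub1set => /andP [aB bB] /andP [cB dB].
have [z [a' [b' [zB Eab Cab]]]] := gz eab aB bB.
have [z' [c' [d' [zB' Ecd Ccd]]]] := gz ecd cB dB.
have [r1 E1] := B_mem zB; have [r2 E2] := B_mem zB'.
case: (P_spec u z) => Ppz Upz Lz; case: (P_spec v z') => Ppz' Upz' Lz'.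
set p := rev (belast v (P v z')) ++ r1.
have Lp : z' :: p = rev (v :: P v z') ++ r1.
  by rewrite [v :: P v z']lastI rev_rcons Lz'.
have LE : rev (v :: P v z') ++ r1 = rev r2 ++ u :: P u z.
  by rewrite E1 E2 !rev_cons -!cats1 -!catA.
have Pp : path e z' p.
  rewrite cat_path; have := rev_path_sym Ppz'; rewrite Lz' => ->.
  have -> : last z' (rev (belast v (P v z'))) = v by rewrite E2 /= rev_cons last_rcons.
  by move: Ppz; rewrite E1 /= => /andP [].
have Up : uniq (z' :: p).
  rewrite Lp cat_uniq rev_uniq Upz'.
  move: Upz; rewrite E1 /= => /andP [_ /andP [vr1 ->]]; rewrite andbT.
  apply/hasPn => w wr1; rewrite mem_rev inE negb_or.
  have wB : w \in B u v by apply: (B_tailB zB); rewrite E1 inE wr1 orbT.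
  apply/andP; split.
    by apply/eqP => wv; rewrite -wv wr1 in vr1.
  by apply/negP => wp; apply: (B_disj euv wB); apply: (B_tailB zB' wp).
have Geo := upath_geo Pp Up.
have memk : forall a0 b0, consec a0 b0 (rev r2 ++ u :: P u z) -> [set a0; b0] \in walk_edges z' p.
  by move=> a0 b0 H; apply: consec_we; rewrite Lp LE.
have fw : f \in walk_edges z' p.
  by rewrite Ef; apply: memk; apply: consec_catl; rewrite E1; exists [::], r1.
have gw : g \in walk_edges z' p.
  by rewrite Eg Eab; apply: memk; apply: consec_catl.
have hw : h \in walk_edges z' p.
  rewrite Eh Ecd setUC; apply: memk; rewrite -LE; apply: consec_catr.
  exact: consec_rev.
have gh : g != h.
  apply/eqP => gh; have : a \in h by rewrite -gh Eg !inE eqxx.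
  rewrite Eh !inE => /orP [/eqP ac|/eqP ad].
    by apply: (B_disj euv aB); rewrite ac.
  by apply: (B_disj euv aB); rewrite ad.
have := Hgp z' p Geo.
have : [set f; g; h] \subset [set k in S | k \in walk_edges z' p].
  by apply/subsetP => k; rewrite !inE => /orP [/orP [] |] /eqP ->; rewrite ?fS ?gS ?hS ?fw ?gw ?hw.
move/subset_leq_card; rewrite cards3 //; last by rewrite eq_sym.
  by move=> H1 H2; have := leq_ltn_trans H1 H2.
by rewrite eq_sym.
Qed.

Lemma leaf_in_B u v : e u v -> exists w, w \in B u v /\ degree e w = 1.
Proof.
move=> euv.
case: (@arg_maxnP V v (fun w => w \in B u v) (fun w => size (P u w)) (Bv euv)) => w wB Hmax.
exists w; split => //.
have [r Ew] := B_mem wB.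
have [s Es] : exists s, P u w = rcons s w.
  exists (belast v r); rewrite Ew lastI; congr rcons.
  by case: (P_spec u w) => _ _; rewrite Ew.
have ey0 : e (last u s) w by case: (P_spec u w) => + _ _; rewrite Es rcons_path => /andP [].
have nb : forall y, e w y -> y = last u s.
  move=> y ewy; case: (P_dich u ewy) => E.
    exfalso.
    have yu : y != u by apply/eqP => yu; move: E; rewrite yu P_self; case: (P u w).
    have yB : y \in B u v by rewrite inE yu E Ew /= eqxx.
    by have := Hmax y yB; rewrite /= E size_rcons ltnn.
  move: E; rewrite Es => /rcons_inj [E].
  by case: (P_spec u y) => _ _ Ly; rewrite E Ly.
rewrite /degree (_ : [set y | e w y] = [set last u s]) ?cards1 //.
apply/setP => y; rewrite !inE; apply/idP/eqP => [/nb //|->].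
by rewrite esym.
Qed.

Definition rel_ok (S : {set {set V}}) f g := [exists u, exists v, exists w,
  [&& e u v, f == [set u; v], freeb S f u v & [&& w \in B u v, g \in pendant_edges e & w \in g]]].

Lemma rel_ok_ex (S : {set {set V}}) f : edge_gp_set e S -> f \in S -> exists g, rel_ok S f g.
Proof.
move=> HS fS; have [u [v [euv Ef F]]] := free_ex HS fS.
have [w [wB dw]] := leaf_in_B euv.
have /cards1P [y Ey] : #|[set y | e w y]| == 1 by rewrite -/(degree e w) dw.
have : y \in [set y | e w y] by rewrite Ey inE.
rewrite inE => ewy.
exists [set w; y]; apply/existsP; exists u; apply/existsP; exists v; apply/existsP; exists w.
have wg : w \in [set w; y] by rewrite !inE eqxx.
rewrite euv F wB wg Ef eqxx andbT.
rewrite [_ \in pendant_edges e]inE !andTb; apply/andP; split.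
  by rewrite inE; apply/existsP; exists w; apply/existsP; exists y; rewrite ewy eqxx.
by apply/existsP; exists w; rewrite wg dw.
Qed.

Definition phi (S : {set {set V}}) f := odflt set0 [pick g | rel_ok S f g].

Lemma phi_ok (S : {set {set V}}) f : edge_gp_set e S -> f \in S -> rel_ok S f (phi S f).
Proof.
move=> HS fS; rewrite /phi; case: pickP => [g //|H].
by have [g Hg] := rel_ok_ex HS fS; rewrite H in Hg.
Qed.

Lemma phi_inj (S : {set {set V}}) : edge_gp_set e S -> {in S &, injective (phi S)}.
Proof.
move=> HS f1 f2 f1S f2S E; case: (eqVneq f1 f2) => [//|ne]; exfalso.
have := phi_ok HS f1S; have := phi_ok HS f2S; rewrite -E.
set g := phi S f1.
case/existsP => u2 /existsP [v2 /existsP [w2 /and4P [e2 /eqP Ef2 F2 /and3P [w2B _ w2g]]]].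
case/existsP => u1 /existsP [v1 /existsP [w1 /and4P [e1 /eqP Ef1 F1 /and3P [w1B gp w1g]]]].
have [a [b [eab Eg]]] : exists a b, e a b /\ g = [set a; b].
  by apply: edge_ex; move: gp; rewrite inE => /andP [].
have ne' : f2 != f1 by rewrite eq_sym.
case: (eqVneq w1 w2) => [w12|w12].
  by apply: (Dlem f1S f2S ne e1 Ef1 e2 Ef2 F1 F2 w1B); rewrite w12.
have ew : e w1 w2.
  move: w1g w2g w12; rewrite Eg !inE.
  case/orP => /eqP ->; case/orP => /eqP ->.
  - by rewrite eqxx.
  - by move=> _; exact: eab.
  - by move=> _; rewrite esym; exact: eab.
  - by rewrite eqxx.
case: (boolP (w2 \in B u1 v1)) => w2B1.
  exact: (Dlem f1S f2S ne e1 Ef1 e2 Ef2 F1 F2 w2B1 w2B).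
case: (boolP (w1 \in B u2 v2)) => w1B2.
  exact: (Dlem f2S f1S ne' e2 Ef2 e1 Ef1 F2 F1 w1B2 w1B).
have [A1 A2] := Cross e1 w1B ew w2B1.
have ew' : e w2 w1 by rewrite esym.
have [A3 A4] := Cross e2 w2B ew' w1B2.
by move: ne; rewrite Ef1 Ef2 -A1 -A2 -A3 -A4 setUC eqxx.
Qed.

Lemma upper (S : {set {set V}}) : edge_gp_set e S -> #|S| <= #|pendant_edges e|.
Proof.
move=> HS; rewrite -(card_in_imset (phi_inj HS)).
apply: subset_leq_card; apply/subsetP => g /imsetP [f fS ->].
have := phi_ok HS fS.
by case/existsP => u /existsP [v /existsP [w /and4P [_ _ _ /and3P [_ -> _]]]].
Qed.

End Tree.


Lemma nth_cat1 (T : Type) (x0 a : T) s t : nth x0 (s ++ a :: t) (size s) = a.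
Proof. by elim: s. Qed.

Lemma nth_cat2 (T : Type) (x0 a b : T) s t : nth x0 (s ++ a :: b :: t) (size s).+1 = b.
Proof. by elim: s. Qed.

Lemma deg2 (V : finType) (e : rel V) a c b : e a c -> e a b -> c != b -> 1 < degree e a.
Proof.
move=> eac eab cb; rewrite /degree.
have H : [set c; b] \subset [set y | e a y].
  by apply/subsetP => y; rewrite !inE => /orP [] /eqP ->.
by apply: (leq_trans _ (subset_leq_card H)); rewrite cards2 cb.
Qed.

Lemma pend_gp (V : finType) (e : rel V) : symmetric e -> edge_gp_set e (pendant_edges e).
Proof.
move=> esym; split.
  by apply/subsetP => f; rewrite inE => /andP [].
move=> x p Geo; have Up := geo_uniq Geo; have [Pp _] := Geo.
set N := nth x (x :: p).
have sub : [set f in pendant_edges e | f \in walk_edges x p] \subset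
    [set [set N 0; N 1]; [set N (size p).-1; N (size p)]].
  apply/subsetP => f; rewrite inE => /andP [fp /we_consec [a [b [Ef [s1 [s2 Es]]]]]].
  rewrite !inE.
  case: s2 Es => [|d s2] Es.
    have sp : size p = (size s1).+1.
      move: (congr1 size Es); rewrite /= size_cat /=.
      by move: (size p) (size s1) => m k; clear; lia.
    apply/orP; right; rewrite Ef /N Es sp /= nth_cat1 nth_cat2.
    by [].
  case/lastP: s1 Es => [|s1 c] Es.
    by apply/orP; left; rewrite Ef /N Es.
  exfalso.
  rewrite cat_rcons in Es.
  have Cca : consec c a (x :: p) by rewrite Es; exists s1, (b :: d :: s2).
  have Cab : consec a b (x :: p) by rewrite Es; exists (rcons s1 c), (d :: s2); rewrite cat_rcons.
  have Cbd : consec b d (x :: p) by rewrite Es; exists (rcons (rcons s1 c) a), s2; rewrite !cat_rcons.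
  have eca := consec_path Cca Pp; have eab := consec_path Cab Pp; have ebd := consec_path Cbd Pp.
  move: Up; rewrite Es cat_uniq => /and3P [_ _ /=].
  rewrite !inE !negb_or => /andP [/and4P [_ cb _ _] /andP [/and3P [_ ad _] _]].
  move: fp; rewrite inE => /andP [_ /existsP [z /andP [zf /eqP dz]]].
  move: zf; rewrite Ef !inE => /orP [] /eqP zE; rewrite zE in dz.
    have eac : e a c by rewrite esym.
    by have := deg2 eac eab cb; rewrite dz.
  have eba : e b a by rewrite esym.
  by have := deg2 eba ebd ad; rewrite dz.
apply: (leq_ltn_trans (subset_leq_card sub)).
by rewrite cards2; case: (_ != _).
Qed.

Unset Implicit Arguments.
Set Strict Implicit.

Theorem theorem3p3 (V : finType) (e : rel V) :
  is_tree e -> gpe e = #|pendant_edges e|.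
Proof.
move=> [[esym eirr] [econn eacyc]]; apply/eqP; rewrite eqn_leq; apply/andP; split.
  apply/bigmax_leqP => S /asboolP HS.
  exact: (upper esym eirr eacyc econn HS).
rewrite /gpe; apply: leq_bigmax_cond; apply/asboolP.
exact: pend_gp.
Qed.
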